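(* Let $T,N,N',L,L'$ be positive integers, let $\lambda\ge0$ and $\eta>0$ be real numbers, and let $p_1<p_2<\dots<p_L$ be primes with $p_i\ge 2L(L+T-1)\eta$ for every $i\in[L]$ and $p_L> LN'/L'-2L-2T+2$. Let $N_i=p_i+2L+2T-2$ for $i\in[L]$, and suppose $\lambda<\dfrac{N'-L-1/\eta}{N_L/L-N'/L'}$. Then $$\left(\frac{N_L\lambda}{L}+\sum_{i=1}^L\frac{N_i}{p_i}\right)^{-1}>\left(N'\left(\frac{\lambda}{L'}+1\right)\right)^{-1}.$$ *)

(* Defs.v *)
From mathcomp Require Export all_boot all_order all_algebra.
From mathcomp Require Export reals.
Export Order.TTheory GRing.Theory Num.Theory.
Local Open Scope ring_scope.

Definition Nidx {R : realType} (T L : nat) (p : nat -> nat) (i : nat) : R :=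
  (p i)%:R + 2 * L%:R + 2 * T%:R - 2.

(* Main.v *)
From mathcomp Require Import ring lra.
Require Import Defs.
Local Open Scope ring_scope.

Theorem lemma4 (R : realType) (T N N' L L' : nat) (lam eta : R) (p : nat -> nat) :
  (0 < T)%N -> (0 < N)%N -> (0 < N')%N -> (0 < L)%N -> (0 < L')%N ->
  0 <= lam -> 0 < eta ->
  (forall i, (1 <= i <= L)%N -> prime (p i)) ->
  (forall i j, (1 <= i)%N -> (i < j)%N -> (j <= L)%N -> (p i < p j)%N) ->
  (forall i, (1 <= i <= L)%N ->
     2 * L%:R * (L%:R + T%:R - 1) * eta <= (p i)%:R :> R) ->
  (p L)%:R > L%:R * N'%:R / L'%:R - 2 * L%:R - 2 * T%:R + 2 :> R ->
  lam < (N'%:R - L%:R - 1 / eta) / (Nidx T L p L / L%:R - N'%:R / L'%:R) ->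
  (Nidx T L p L * lam / L%:R
     + \sum_(1 <= i < L.+1) Nidx T L p i / (p i)%:R)^-1
  > (N'%:R * (lam / L'%:R + 1))^-1.
Proof.
move=> T0 N0 N'0 L0 L'0 lam0 eta0 hpr _ hbig hpL hlam.
have Lp : (0 : R) < L%:R by rewrite ltr0n.
have L'p : (0 : R) < L'%:R by rewrite ltr0n.
have N'p : (0 : R) < N'%:R by rewrite ltr0n.
have T1 : (1 : R) <= T%:R by rewrite ler1n.
have hD : 0 < Nidx (R:=R) T L p L / L%:R - N'%:R / L'%:R.
  have e : N'%:R / L'%:R = (L%:R * N'%:R / L'%:R) / (L%:R : R).
    by field; apply/andP; split; lra.
  rewrite e -mulrBl; apply: divr_gt0 => //.
  rewrite /Nidx; lra.
have ppos : forall i, (1 <= i <= L)%N -> (0 : R) < (p i)%:R.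
  by move=> i /hpr /prime_gt0; rewrite ltr0n.
have hterm : forall i, (1 <= i <= L)%N ->
    Nidx (R:=R) T L p i / (p i)%:R <= 1 + 1 / (L%:R * eta).
  move=> i hi; have pp := ppos i hi; have hb := hbig i hi.
  rewrite ler_pdivrMr // mulrDl mul1r /Nidx.
  have -> : (L%:R * eta)^-1 * (p i)%:R = (p i)%:R / (L%:R * eta) by rewrite mulrC.
  have : 2 * L%:R + 2 * T%:R - 2 <= (p i)%:R / (L%:R * eta).
    rewrite ler_pdivlMr ?mulr_gt0 //. nra.
  lra.
have hS : \sum_(1 <= i < L.+1) Nidx (R:=R) T L p i / (p i)%:R <= L%:R + 1 / eta.
  apply: (@le_trans _ _ (\sum_(1 <= i < L.+1) (1 + 1 / (L%:R * eta)))).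
    rewrite big_nat [X in _ <= X]big_nat; apply: ler_sum => i hi; exact: hterm.
  rewrite sumr_const_nat subn1 /= mulrnDl.
  have -> : (1 / (L%:R * eta)) *+ L = 1 / eta.
    rewrite -mulr_natr mul1r invfM mulrAC mulVf ?mul1r //; lra.
  by [].
have hS0 : 0 < \sum_(1 <= i < L.+1) Nidx (R:=R) T L p i / (p i)%:R.
  rewrite big_nat_recl // /=.
  apply: ltr_pwDl.
    have h1 : (1 <= 1 <= L)%N by rewrite leqnn L0.
    apply: divr_gt0 (ppos _ h1); rewrite /Nidx; have := ppos _ h1; lra.
  rewrite big_nat; apply: sumr_ge0 => i /andP [hi1 hi2].
  have hi : (1 <= i.+1 <= L)%N by rewrite ltn0Sn.
  apply: divr_ge0; last by apply: ltW; exact: ppos.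
  rewrite /Nidx; have := ppos _ hi; lra.
have hl : lam * (Nidx (R:=R) T L p L / L%:R - N'%:R / L'%:R) < N'%:R - L%:R - 1 / eta.
  by rewrite -ltr_pdivlMr.
have hA0 : 0 < Nidx (R:=R) T L p L * lam / L%:R + \sum_(1 <= i < L.+1) Nidx (R:=R) T L p i / (p i)%:R.
  apply: ltr_wpDl => //; apply: divr_ge0; last exact: ltW.
  apply: mulr_ge0 => //; rewrite /Nidx.
  have h1 : (1 <= L <= L)%N by rewrite leqnn L0.
  have := ppos _ h1; lra.
have hq : 0 <= lam / L'%:R by apply: divr_ge0 => //; exact: ltW.
have hB0 : 0 < N'%:R * (lam / L'%:R + 1) by apply: mulr_gt0 => //; lra.
rewrite ltf_pV2 ?posrE //.
rewrite mulrDr mulr1.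
have e1 : Nidx (R:=R) T L p L * lam / L%:R = lam * (Nidx (R:=R) T L p L / L%:R) by rewrite mulrAC mulrC.
have e2 : N'%:R * (lam / L'%:R) = lam * (N'%:R / L'%:R) by rewrite mulrCA.
rewrite e1 e2; move: hl hS; rewrite mulrBr.
move: (lam * (Nidx (R:=R) T L p L / L%:R)) (lam * (N'%:R / L'%:R)) (\sum_(1 <= i < L.+1) Nidx (R:=R) T L p i / (p i)%:R) (1 / eta) => a b c d.
move=> h1 h2; lra.
Qed.
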